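(* Fix $n\in\mathbb N$, a noise level $\varepsilon\in[0,1)$, a horizon $K$ and a target risk level $\bar q\in[0,1]$. Let $G=(\mathcal V,\mathcal E)$ be a graph with $|\mathcal V|=n$ and minimum degree $\underline\Delta_G=\min_v|\mathcal N(v)|$. Under the Water-Filling Strategy $\psi^{wf}_{\bar q}$, $$\mathbb P(T_{IH}\ne T)\le1-\left(1-\frac1{\underline\Delta_G}\right)^K.$$
   Context: Model: finite connected undirected graph, neighborhoods $\mathcal N(v)$; goal $D$ uniform; fixed initial vertex; $B_t$ i.i.d. Bernoulli$(1-\varepsilon)$. The agent in state $X_t$ chooses $a_t\in\mathcal N(X_t)$; if $B_t=1$, $X_{t+1}=a_t$, else uniform on $\mathcal N(X_t)$. $T=\inf\{t\ge1:X_t=D\}$; if not reached by $K$, set $X_{K+1}=D$, $B_K=1$. Random-Step: $a_t$ uniform on $\mathcal N(X_t)$; Goal-Attempt: $a_t=D$ (only if $D\in\mathcal N(X_t)$). $T_{IH}=\inf\{t\ge1:$ Goal-Attempt at $t-1$ and $B_{t-1}=1\}$ ($\le K+1$). $L(t)=\sum_{s\le t}\mathbb I(X_s\in\mathcal N(D))$. Water-Filling Strategy $\psi^{wf}_{\bar q}$: $t^*=\lceil1/\bar q-\varepsilon/(1-\varepsilon)\rceil$ (integer argument assumed), $p_t=\frac{\bar q}{1-\varepsilon}(1-t\bar q)^{-1}$ for $0\le t<t^*-1$, else $1$; if $X_t\in\mathcal N(D)$ and $T_{IH}>t$, Goal-Attempt with probability $p_{L(t)}$, else Random-Step; otherwise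 Random-Step. *)

(* Defs.v *)
From HB Require Import structures.
From mathcomp Require Import all_boot all_order all_algebra.

Set Implicit Arguments.
Unset Strict Implicit.
Unset Printing Implicit Defensive.

Import Order.TTheory GRing.Theory Num.Theory.
Local Open Scope ring_scope.

Definition nbhd (V : finType) (e : rel V) (v : V) : {set V} := [set w | e v w].

(* minimum degree; the neutral element #|V| exceeds every degree *)
Definition min_degree (V : finType) (e : rel V) : nat :=
  \big[minn/#|V|]_(v : V) #|nbhd e v|.

Definition tstar (R : archiRealFieldType) (eps qbar : R) : int :=
  Num.ceil (qbar^-1 - eps / (1 - eps)).

Definition p_wf (R : archiRealFieldType) (eps qbar : R) (l : nat) : R :=
  if (l%:Z < tstar eps qbar - 1)%R
  then qbar / (1 - eps) * (1 - l%:R * qbar)^-1 else 1.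

(* One time step outcome: (goal-attempt flag g_t, action a_t,
   success bit B_t, next state X_{t+1}). *)
Definition step (V : finType) := (bool * V * bool * V)%type.
Definition st_g (V : finType) (s : step V) : bool := s.1.1.1.
Definition st_a (V : finType) (s : step V) : V := s.1.1.2.
Definition st_b (V : finType) (s : step V) : bool := s.1.2.
Definition st_y (V : finType) (s : step V) : V := s.2.

Section Model.
Variables (R : archiRealFieldType) (V : finType) (e : rel V) (x0 : V)
  (eps qbar : R) (K : nat).

Definition Xs (st : seq (step V)) (t : nat) : V :=
  nth x0 (x0 :: map (@st_y V) st) t.

Definition Lcount (D : V) (st : seq (step V)) (t : nat) : nat :=
  \sum_(s < t.+1) (Xs st s \in nbhd e D).

(* a successful goal attempt occurred at some time < t, i.e. T_IH <= t *)
Definition ih_before (st : seq (step V)) (t : nat) : bool :=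
  has (fun s => st_g s && st_b s) (take t st).

Definition unifN (x y : V) : R := (y \in nbhd e x)%:R / #|nbhd e x|%:R.

(* conditional probability of the step outcome s at time t given the history *)
Definition step_weight (D : V) (st : seq (step V)) (t : nat) (s : step V) : R :=
  let x := Xs st t in
  let elig := (x \in nbhd e D) && ~~ ih_before st t in
  let p := p_wf eps qbar (Lcount D st t) in
  let wg := if elig then (if st_g s then p else 1 - p)
            else (if st_g s then 0 else 1) in
  let wa := if st_g s then (st_a s == D)%:R else unifN x (st_a s) in
  let wb := if st_b s then 1 - eps else eps in
  let wy := if st_b s then (st_y s == st_a s)%:R else unifN x (st_y s) in
  wg * wa * wb * wy.

Definition traj_weight (D : V) (st : K.-tuple (step V)) : R :=
  \prod_(t < K) step_weight D st t (tnth st t).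

(* T = inf{t >= 1 : X_t = D}, = K+1 if D is not reached by time K *)
Definition hit_time (D : V) (st : seq (step V)) : nat :=
  (find (pred1 D) (map (@st_y V) st)).+1.

(* T_IH = inf{t >= 1 : goal attempt at t-1 and B_{t-1} = 1}, = K+1 if none *)
Definition ih_time (st : seq (step V)) : nat :=
  (find (fun s => st_g s && st_b s) st).+1.

Definition prob_IH_ne_T : R :=
  \sum_(D : V) \sum_(st : K.-tuple (step V))
    (#|V|%:R^-1 * traj_weight D st) * (ih_time st != hit_time D st)%:R.

End Model.

(* Main.v *)
Require Import Defs.
From HB Require Import structures.
From mathcomp Require Import all_boot all_order all_algebra.
From mathcomp Require Import ring lra.
Import Order.TTheory GRing.Theory Num.Theory.
Local Open Scope ring_scope.

Section Gen.
Variables (R : realFieldType) (S : finType) (w : seq S -> S -> R) (bad : pred S) (dl : R).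
Hypotheses (w0 : forall h s, 0 <= w h s) (w1 : forall h, \sum_s w h s <= 1)
  (wbad : forall h, \sum_s w h s * (bad s)%:R <= dl) (d0 : 0 <= dl) (d1 : dl <= 1).

Definition Qw h {n} (t : n.-tuple S) := \prod_(i < n) w (h ++ take i t) (tnth t i).

Lemma sum_tuple_cons n (F : n.+1.-tuple S -> R) :
  \sum_t F t = \sum_s \sum_(t : n.-tuple S) F [tuple of s :: t].
Proof.
rewrite pair_big /=.
rewrite (reindex (fun p : S * n.-tuple S => [tuple of p.1 :: p.2])) //=.
exists (fun t : n.+1.-tuple S => (thead t, [tuple of behead t])).
  by case=> s t _ /=; congr pair; apply/val_inj.
by move=> t _; rewrite [t in RHS]tuple_eta.
Qed.

Lemma Qw_cons h n s (t : n.-tuple S) :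
  Qw h [tuple of s :: t] = w h s * Qw (rcons h s) t.
Proof.
rewrite /Qw big_ord_recl tnth0 /= cats0; congr (_ * _).
by apply: eq_bigr => i _; rewrite tnthS /= cat_rcons.
Qed.

Lemma Qw_ge0 h n (t : n.-tuple S) : 0 <= Qw h t.
Proof. by apply: prodr_ge0 => i _. Qed.

Lemma Qw_sum n : forall h, \sum_(t : n.-tuple S) Qw h t <= 1.
Proof.
elim: n => [|n IH] h.
  rewrite /Qw; under eq_bigr do rewrite big_ord0.
  by rewrite sumr_const card_tuple expn0.
rewrite sum_tuple_cons.
apply: le_trans (w1 h); apply: ler_sum => s _.
under eq_bigr do rewrite Qw_cons.
rewrite -mulr_sumr; rewrite -[leRHS]mulr1; apply: ler_wpM2l => //.
Qed.

Lemma Qw_bad n : forall h,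
  \sum_(t : n.-tuple S) Qw h t * (has bad t)%:R <= 1 - (1 - dl) ^+ n.
Proof.
elim: n => [|n IH] h.
  rewrite expr0 subrr big1 // => t _.
  have : size t == 0 by rewrite size_tuple.
  by case: (tval t) => //= _; rewrite mulr0.
have d0' := d0; have d1' := d1.
have e0 : 0 <= (1 - dl) ^+ n by apply: exprn_ge0; lra.
have e1 : (1 - dl) ^+ n <= 1 by apply: exprn_ile1; lra.
have [c cE] : exists c, c = 1 - (1 - dl) ^+ n by eexists.
have c0 : 0 <= c by rewrite cE; lra.
have c1 : 0 <= 1 - c by rewrite cE; lra.
rewrite -cE in IH.
rewrite sum_tuple_cons.
apply: (@le_trans _ _ (\sum_s (c * w h s + (1 - c) * (w h s * (bad s)%:R)))).
  apply: ler_sum => s _.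
  under eq_bigr do rewrite Qw_cons /= -mulrA.
  rewrite -mulr_sumr.
  case: (bad s) => /=.
    under eq_bigr do rewrite mulr1.
    have -> : c * w h s + (1 - c) * (w h s * 1) = w h s * 1 by ring.
    apply: ler_wpM2l => //; exact: Qw_sum.
  have -> : c * w h s + (1 - c) * (w h s * 0) = w h s * c by ring.
  apply: ler_wpM2l => //; exact: IH.
rewrite big_split /= -!mulr_sumr.
apply: (@le_trans _ _ (c * 1 + (1 - c) * dl)).
  by apply: lerD; apply: ler_wpM2l.
rewrite cE exprS.
move: e0 e1; set a := (1 - dl) ^+ n => e0 e1.
have -> : 1 - (1 - a) = a by ring.
nra.
Qed.
End Gen.

Section M.
Variables (R : archiRealFieldType) (V : finType) (e : rel V) (x0 : V) (eps qbar : R).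

Lemma Xs_take (st : seq (step V)) t s : (s <= t)%N ->
  Xs x0 (take t st) s = Xs x0 st s.
Proof.
rewrite /Xs; case: s => [|s] //= hs.
by rewrite map_take nth_take.
Qed.

Lemma step_weight_take D (st : seq (step V)) t s :
  step_weight e x0 eps qbar D (take t st) t s = step_weight e x0 eps qbar D st t s.
Proof.
rewrite /step_weight Xs_take //.
have -> : Lcount e x0 D (take t st) t = Lcount e x0 D st t.
  by apply: eq_bigr => i _; rewrite Xs_take // -ltnS.
by rewrite /ih_before take_takel.
Qed.

Lemma p_bounds l : 0 <= eps < 1 -> 0 <= qbar ->
  0 <= p_wf eps qbar l <= 1.
Proof.
move=> /andP[e0 e1] q0.
rewrite /p_wf /tstar; case: ifP => [H|_]; last by rewrite ler01 lexx.
move: H; rewrite ltrBrDr ceil_gt_int /= rmorphD /= rmorph1 => H.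
have e2 : 1 - eps != 0 by rewrite subr_eq0 eq_sym lt_eqF.
case: (eqVneq qbar 0) => [->|qn0]; first by rewrite !mul0r lexx ler01.
have qp : 0 < qbar by rewrite lt_def qn0.
have r0 : 0 <= eps / (1 - eps) by rewrite divr_ge0 // subr_ge0 ltW.
have h1 : (l%:R + 1) * qbar < (qbar^-1 - eps / (1 - eps)) * qbar.
  by rewrite ltr_pM2r.
rewrite mulrBl mulVf // mulrDl mul1r in h1.
have ha : qbar / (1 - eps) = qbar + eps / (1 - eps) * qbar by field.
have hA : qbar / (1 - eps) < 1 - l%:R * qbar.
  rewrite ha; move: h1; set lq := l%:R * qbar; set rq := eps / (1 - eps) * qbar.
  move=> h1; lra.
have a0 : 0 <= qbar / (1 - eps) by rewrite ha; apply: addr_ge0; [exact: ltW | exact: mulr_ge0 r0 (ltW qp)].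
have A0 : 0 < 1 - l%:R * qbar by apply: le_lt_trans hA.
apply/andP; split; first by rewrite divr_ge0 // ltW.
by rewrite ler_pdivrMr // mul1r ltW.
Qed.

Lemma sum_pair (A B : finType) (F : A * B -> R) :
  \sum_p F p = \sum_a \sum_b F (a, b).
Proof. by rewrite pair_bigA /=; apply: eq_bigr => -[a b]. Qed.

Lemma sum_step (F : step V -> R) :
  \sum_s F s = \sum_g \sum_a \sum_b \sum_y F (g, a, b, y).
Proof.
rewrite (@sum_pair _ _ (F)) (@sum_pair _ _ (fun p => \sum_y F (p, y))).
by rewrite (@sum_pair _ _ (fun q => \sum_b \sum_y F (q, b, y))).
Qed.

Lemma sum_eq1 (a : V) (c : V -> R) : \sum_y (y == a)%:R * c y = c a.
Proof.
rewrite (bigD1 a) //= eqxx mul1r big1 ?addr0 // => y /negbTE ->.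
by rewrite mul0r.
Qed.

Lemma sum_ind1 (a : V) : \sum_y (y == a)%:R = 1 :> R.
Proof. by rewrite (bigD1 a) //= eqxx big1 ?addr0 // => y /negbTE ->. Qed.

Lemma unif_ge0 x y : 0 <= unifN R e x y.
Proof. by rewrite /unifN divr_ge0. Qed.

Lemma sum_unif x : \sum_y unifN R e x y <= 1.
Proof.
rewrite /unifN -mulr_suml.
rewrite (eq_bigr (fun y => if y \in nbhd e x then 1 else 0)); last by move=> y _; case: (y \in _).
rewrite -big_mkcond sumr_const.
case: (posnP #|nbhd e x|) => [->|hp]; first by rewrite mulr0n mul0r ler01.
by rewrite divff ?pnatr_eq0 -?lt0n.
Qed.

Lemma sw_ge0 D st t s : 0 <= eps < 1 -> 0 <= qbar ->
  0 <= step_weight e x0 eps qbar D st t s.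
Proof.
move=> he hq; have /andP[p0 p1] := p_bounds (Lcount e x0 D st t) he hq.
case/andP: he => e0 e1.
case: s => [[[g a] b] y]; rewrite /step_weight /st_g /st_a /st_b /st_y /=.
set p := p_wf _ _ _.
 case: (_ && _); case: g; case: b;
  rewrite /= ?mulr_ge0 ?unif_ge0 ?ler0n ?subr_ge0 ?ler01 ?invr_ge0 ?ler0n //; exact: ltW.
Qed.

Lemma nest4 (F : step V -> R) (wg : bool -> R) (wa : bool -> V -> R)
  (wb : bool -> R) (wy : bool -> bool -> V -> V -> R) :
  (forall g a b y, F (g, a, b, y) = wg g * wa g a * wb b * wy g b a y) ->
  \sum_s F s = \sum_g wg g * \sum_a wa g a * \sum_b wb b * \sum_y wy g b a y.
Proof.
move=> HF; rewrite sum_step; apply: eq_bigr => g _; rewrite !mulr_sumr.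
apply: eq_bigr => a _; rewrite !mulr_sumr; apply: eq_bigr => b _.
rewrite !mulr_sumr; apply: eq_bigr => y _; by rewrite HF !mulrA.
Qed.

Lemma sum_mul_le1 (I : finType) (f G : I -> R) :
  (forall i, 0 <= f i) -> (forall i, G i <= 1) -> \sum_i f i <= 1 ->
  \sum_i f i * G i <= 1.
Proof.
move=> f0 G1 s1; apply: le_trans s1; apply: ler_sum => i _.
exact: ler_piMr.
Qed.

Lemma sum_eq1r (a : V) (c : V -> R) : \sum_y c y * (y == a)%:R = c a.
Proof. by rewrite -(sum_eq1 a); apply: eq_bigr => y _; rewrite mulrC. Qed.

Lemma sw_sum D st t : 0 <= eps < 1 -> 0 <= qbar ->
  \sum_s step_weight e x0 eps qbar D st t s <= 1.
Proof.
move=> he hq; have /andP[p0 p1] := p_bounds (Lcount e x0 D st t) he hq.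
case/andP: he => e0 e1.
set p := p_wf _ _ _ in p0 p1.
set x := Xs x0 st t.
set el := (x \in nbhd e D) && ~~ ih_before st t.
rewrite (@nest4 _ (fun g => if el then (if g then p else 1 - p) else (if g then 0 else 1))
   (fun g a => if g then (a == D)%:R else unifN R e x a)
   (fun b => if b then 1 - eps else eps)
   (fun g b a y => if b then (y == a)%:R else unifN R e x y)) //.
apply: sum_mul_le1.
- by case; case: el; rewrite ?subr_ge0 ?ler01 ?lexx.
- move=> g; apply: sum_mul_le1.
  + by case: g => a; rewrite ?ler0n ?unif_ge0.
  + move=> a; apply: sum_mul_le1.
    * by case; [rewrite subr_ge0; exact: ltW | exact: e0].
    * case=> /=; first by rewrite sum_ind1.
      exact: sum_unif.
    * by rewrite big_bool /= subrK.
  + case: g; last exact: sum_unif.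
    by rewrite sum_ind1.
- by rewrite big_bool; case: el => /=; [rewrite addrC subrK | rewrite add0r].
Qed.

Definition badf (D : V) (s : step V) : bool := (st_y s == D) (+) (st_g s && st_b s).

Lemma sw_bad D st t : 0 <= eps < 1 -> 0 <= qbar ->
  \sum_s step_weight e x0 eps qbar D st t s * (badf D s)%:R
    <= unifN R e (Xs x0 st t) D.
Proof.
move=> he hq; have /andP[p0 p1] := p_bounds (Lcount e x0 D st t) he hq.
case/andP: he => e0 e1.
set p := p_wf _ _ _ in p0 p1.
set x := Xs x0 st t.
set el := (x \in nbhd e D) && ~~ ih_before st t.
have u0 : 0 <= unifN R e x D by exact: unif_ge0.
have U : \sum_y unifN R e x y * ((y == D) (+) false)%:R = unifN R e x D.
  transitivity (\sum_y unifN R e x y * (y == D)%:R); last exact: sum_eq1r.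
  by apply: eq_bigr => y _; rewrite addbF.
rewrite (@nest4 _ (fun g => if el then (if g then p else 1 - p) else (if g then 0 else 1))
   (fun g a => if g then (a == D)%:R else unifN R e x a)
   (fun b => if b then 1 - eps else eps)
   (fun g b a y => (if b then (y == a)%:R else unifN R e x y) * ((y == D) (+) (g && b))%:R));
  last by move=> g a b y; rewrite mulrA.
apply: (@le_trans _ _ (\sum_g (if el then (if g then p else 1 - p) else (if g then 0 else 1)) * unifN R e x D)); last first.
  rewrite -mulr_suml big_bool; case: el => /=; [rewrite addrC subrK | rewrite add0r]; by rewrite mul1r.
apply: ler_sum => g _; apply: ler_wpM2l.
  by case: g; case: el; rewrite ?subr_ge0 ?ler01 ?lexx.
case: g => /=.
  rewrite (bigD1 D) //= eqxx mul1r [X in _ + X <= _]big1 ?addr0; last first.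
    by move=> a /negbTE ->; rewrite mul0r.
  have Z : \sum_y (y == D)%:R * ((y == D) (+) true)%:R = 0 :> R.
    by rewrite big1 // => y _; case: (y == D); rewrite ?mulr0 ?mul0r.
  rewrite big_bool /= Z U mulr0 add0r.
  exact: ler_piMl (ltW e1).
have I a : \sum_b (if b then 1 - eps else eps) *
    \sum_y (if b then (y == a)%:R else unifN R e x y) * ((y == D) (+) (false && b))%:R
    = (1 - eps) * (a == D)%:R + eps * unifN R e x D.
  rewrite big_bool /= U; congr (_ + _); congr (_ * _).
  transitivity (\sum_y ((y == a)%:R * (y == D)%:R : R)); last exact: sum_eq1.
  by apply: eq_bigr => y _; rewrite addbF.
rewrite (eq_bigr _ (fun a _ => congr1 (fun z => unifN R e x a * z) (I a))).
rewrite (eq_bigr (fun a => (1 - eps) * (unifN R e x a * (a == D)%:R) + unifN R e x a * (eps * unifN R e x D))); last by move=> a _; ring.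
rewrite big_split /= -mulr_sumr -mulr_suml sum_eq1r.
have h : (\sum_a unifN R e x a) * (eps * unifN R e x D) <= eps * unifN R e x D.
  by apply: ler_piMl; [exact: mulr_ge0 | exact: sum_unif].
move: h; set S := _ * (eps * _); set u := unifN R e x D => h; lra.
Qed.

Lemma event_incl D (st : seq (step V)) :
  ih_time st != hit_time D st -> has (badf D) st.
Proof.
elim: st => [|s st IH] //=.
rewrite /ih_time /hit_time /badf /=.
case: (_ && _); case: (_ == D) => //=.
Qed.

Lemma mindeg_le v : (min_degree e <= #|nbhd e v|)%N.
Proof.
have H : forall r, v \in r ->
    (\big[minn/#|V|]_(i <- r) #|nbhd e i| <= #|nbhd e v|)%N.
  elim=> //= a r IH; rewrite inE big_cons => /orP[/eqP <-|/IH h].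
    exact: geq_minl.
  by rewrite geq_min h orbT.
exact: H (mem_index_enum v).
Qed.

Lemma deg_pos x D : (forall x y : V, connect e x y) -> e x D ->
  forall v, (0 < #|nbhd e v|)%N.
Proof.
move=> hc hxD v.
case: (eqVneq v x) => [->|nvx].
  by apply/card_gt0P; exists D; rewrite inE.
case/connectP: (hc v x) => -[|z p] /=.
  by move=> _ xv; rewrite xv eqxx in nvx.
by case/andP => evz _ _; apply/card_gt0P; exists z; rewrite inE.
Qed.

Lemma unif_le x D : (forall x y : V, connect e x y) ->
  unifN R e x D <= (min_degree e)%:R^-1.
Proof.
move=> hc; rewrite /unifN.
case hD: (D \in nbhd e x); last by rewrite mul0r invr_ge0 ler0n.
have exD : e x D by move: hD; rewrite inE.
have dp := @deg_pos x D hc exD.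
have md_pos : (0 < min_degree e)%N.
  rewrite /min_degree; apply: (big_ind (fun n => 0 < n)%N) => //.
    by apply/card_gt0P; exists x0.
  by move=> a b ha hb; rewrite leq_min ha hb.
rewrite mul1r lef_pV2 ?posrE ?ltr0n // ler_nat.
exact: mindeg_le.
Qed.
End M.

Theorem lemma5 (R : archiRealFieldType) (V : finType) (e : rel V) (x0 : V)
  (eps qbar : R) (K : nat) :
  symmetric e -> irreflexive e -> (forall x y : V, connect e x y) ->
  0 <= eps < 1 -> 0 <= qbar <= 1 ->
  (qbar^-1 - eps / (1 - eps)) \is a Num.int ->
  prob_IH_ne_T e x0 eps qbar K <= 1 - (1 - (min_degree e)%:R^-1) ^+ K.
Proof.
move=> hsym hirr hc he /andP[hq _] _.
have d0 : 0 <= (min_degree e)%:R^-1 :> R by rewrite invr_ge0 ler0n.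
have d1 : (min_degree e)%:R^-1 <= 1 :> R.
  case: (posnP (min_degree e)) => [->|hp]; first by rewrite invr0 ler01.
  by rewrite invf_le1 ?ltr0n // ler1n.
have HD : forall D, \sum_(st : K.-tuple (step V))
    traj_weight e x0 eps qbar D st * (ih_time st != hit_time D st)%:R
    <= 1 - (1 - (min_degree e)%:R^-1) ^+ K.
  move=> D.
  pose w := fun (h : seq (step V)) s => step_weight e x0 eps qbar D h (size h) s.
  apply: (@le_trans _ _ (\sum_(st : K.-tuple (step V)) Qw R _ w [::] st * (has (badf V D) st)%:R)).
    apply: ler_sum => st _.
    have -> : traj_weight e x0 eps qbar D st = Qw R _ w [::] st.
      rewrite /traj_weight /Qw; apply: eq_bigr => i _.
      by rewrite cat0s /w size_takel ?size_tuple 1?ltnW // step_weight_take.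
    apply: ler_wpM2l; first by apply: Qw_ge0 => h s; apply: sw_ge0.
    case H: (ih_time st != hit_time D st) => /=; last by rewrite ler0n.
    by rewrite event_incl ?H.
  apply: Qw_bad => //.
  - by move=> h s; exact: sw_ge0.
  - by move=> h; exact: sw_sum.
  - move=> h; apply: le_trans (sw_bad _ _ _ _ _ _ _ _ _ he hq) _; exact: unif_le.
rewrite /prob_IH_ne_T.
apply: (@le_trans _ _ (\sum_(D : V) #|V|%:R^-1 * (1 - (1 - (min_degree e)%:R^-1) ^+ K))).
  apply: ler_sum => D _.
  under eq_bigr do rewrite -mulrA.
  rewrite -mulr_sumr; apply: ler_wpM2l; first by rewrite invr_ge0 ler0n.
  exact: HD.
have Vp : (0 < #|V|)%N by apply/card_gt0P; exists x0.
rewrite sumr_const -(mulr_natl (#|V|%:R^-1 * _)) mulrA mulfV ?mul1r // pnatr_eq0 -lt0n //.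
Qed.
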